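(* Let $\varphi\in\mathcal{A}$ be w.h.i.s. Then, with $\pi:\mathcal{A}\to\mathcal{A}_\varphi$ the projection: every skew-symmetric $3$-derivation of $\mathcal{A}_\varphi$ is zero, so $H^3(\mathcal{A}_\varphi)=\{0\}$; the skew-symmetric $1$-derivations (resp. $2$-derivations) of $\mathcal{A}_\varphi$ are identified with $\{\pi(\vec f)\in\mathcal{A}_\varphi^3\mid\vec f\cdot\vec\nabla\varphi\in\langle\varphi\rangle\}$ (resp. $\{\pi(\vec f)\in\mathcal{A}_\varphi^3\mid\vec f\times\vec\nabla\varphi\in\langle\varphi\rangle\}$); and $H^0(\mathcal{A}_\varphi)\simeq\{\pi(f)\mid\vec\nabla f\times\vec\nabla\varphi\in\langle\varphi\rangle\}$, $H^1(\mathcal{A}_\varphi)\simeq\dfrac{\{\pi(\vec f)\mid\vec f\cdot\vec\nabla\varphi\in\langle\varphi\rangle,\ -\vec\nabla(\vec f\cdot\vec\nabla\varphi)+\mathrm{Div}(\vec f)\vec\nabla\varphi\in\langle\varphi\rangle\}}{\{\pi(\vec\nabla f\times\vec\nabla\varphi)\mid f\in\mathcal{A}\}}$, $H^2(\mathcal{A}_\varphi)\simeq\dfrac{\{\pi(\vec f)\mid\vec f\times\vec\nabla\varphi\in\langle\varphi\rangle\}}{\{\pi(-\vec\nabla(\vec f\cdot\vec\nabla\varphi)+\mathrm{Div}(\vec f)\vec\nabla\varphi)\mid\vec f\in\mathcal{A}^3,\ \vec f\cdot\vec\nabla\varphi\in\langle\varphi\rangle\}}$, where $\langle\varphi\rangle$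 means the ideal (or submodule of $\mathcal{A}^3$) generated by $\varphi$.
   Context: $\mathbf{F}$ is a field of characteristic zero and $\mathcal{A}=\mathbf{F}[x,y,z]$. Elements of $\mathcal{A}^3$ are treated as vector fields: $\vec f\cdot\vec g$, $\vec f\times\vec g$ are the usual inner and cross products, $\vec\nabla f=(\partial f/\partial x,\partial f/\partial y,\partial f/\partial z)$, $\vec\nabla\times$ is the curl and $\mathrm{Div}$ the divergence. Fix positive integers $\varpi_1,\varpi_2,\varpi_3$ without common divisor $>1$ (weights of $x,y,z$). A nonzero polynomial is weight homogeneous of degree $d$ if it is an $\mathbf{F}$-linear combination of monomials $x^ay^bz^c$ with $a\varpi_1+b\varpi_2+c\varpi_3=d$. $\varphi\in\mathcal{A}$ is w.h.i.s. if it is weight homogeneous and $\mathcal{A}_{sing}:=\mathcal{A}/\langle\partial_x\varphi,\partial_y\varphi,\partial_z\varphi\rangle$ is a nonzero finite-dimensional $\mathbf{F}$-vector space. The Poisson bracket $\{\cdot,\cdot\}_\varphi$ on $\mathcal{A}$ is determined by $\{x,y\}_\varphi=\partial_z\varphi$, $\{y,z\}_\varphi=\partial_x\varphi$, $\{z,x\}_\varphi=\partial_y\varphi$; $\varphi$ is a Casimir, so it induces a Poisson bracket $\{\cdot,\cdot\}_{\mathcal{A}_\varphi}$ on $\mathcal{A}_\varphi:=\mathcal{A}/\langle\varphi\rangle$ with $\{\pi(f),\pi(g)\}_{\mathcal{A}_\varphi}=\pi(\{f,g\}_\varphi)$; for $\vec f=(f_1,f_2,f_3)$, $\pi(\vec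 f):=(\pi(f_1),\pi(f_2),\pi(f_3))$. For a Poisson algebra $(\mathcal{B},\{\cdot,\cdot\})$, the Poisson cochains of degree $k$ are the skew-symmetric $k$-derivations $Q:\mathcal{B}^k\to\mathcal{B}$, with coboundary $\delta Q(f_0,\dots,f_k)=\sum_i(-1)^i\{f_i,Q(f_0,\dots,\widehat{f_i},\dots,f_k)\}+\sum_{i<j}(-1)^{i+j}Q(\{f_i,f_j\},f_0,\dots,\widehat{f_i},\dots,\widehat{f_j},\dots,f_k)$; $H^k(\mathcal{A}_\varphi)$ denotes the resulting Poisson cohomology of $(\mathcal{A}_\varphi,\{\cdot,\cdot\}_{\mathcal{A}_\varphi})$. A $1$-derivation of $\mathcal{A}_\varphi$ is identified with $(Q[\pi x],Q[\pi y],Q[\pi z])$ and a $2$-derivation with $(Q[\pi y,\pi z],Q[\pi z,\pi x],Q[\pi x,\pi y])$. *)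

(* Defs.v *)
From HB Require Import structures.
From mathcomp Require Import all_boot all_order all_algebra.
From mathcomp Require Import mpoly.
Set Implicit Arguments. Unset Strict Implicit. Unset Printing Implicit Defensive.
Import Order.TTheory GRing.Theory.
Local Open Scope ring_scope.

Section Defs.
Variable F : fieldType.
Notation A := {mpoly F[3]}.

Definition i0 : 'I_3 := @Ordinal 3 0 isT.
Definition i1 : 'I_3 := @Ordinal 3 1 isT.
Definition i2 : 'I_3 := @Ordinal 3 2 isT.

Definition vx : A := 'X_i0.
Definition vy : A := 'X_i1.
Definition vz : A := 'X_i2.

Definition vec := (A * A * A)%type.
Definition mkv (a b c : A) : vec := (a, b, c).
Definition c1 (v : vec) : A := v.1.1.
Definition c2 (v : vec) : A := v.1.2.
Definition c3 (v : vec) : A := v.2.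

Definition dotv (f g : vec) : A := c1 f * c1 g + c2 f * c2 g + c3 f * c3 g.
Definition crossv (f g : vec) : vec :=
  mkv (c2 f * c3 g - c3 f * c2 g) (c3 f * c1 g - c1 f * c3 g) (c1 f * c2 g - c2 f * c1 g).
Definition grad (f : A) : vec := mkv (f^`M(i0)) (f^`M(i1)) (f^`M(i2)).
Definition Divv (f : vec) : A := (c1 f)^`M(i0) + (c2 f)^`M(i1) + (c3 f)^`M(i2).
Definition addv (f g : vec) : vec := mkv (c1 f + c1 g) (c2 f + c2 g) (c3 f + c3 g).
Definition oppv (f : vec) : vec := mkv (- c1 f) (- c2 f) (- c3 f).
Definition smulv (a : A) (f : vec) : vec := mkv (a * c1 f) (a * c2 f) (a * c3 f).

Definition wdeg (w : 'I_3 -> nat) (m : 'X_{1..3}) : nat := \sum_(i < 3) w i * m i.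
Definition weight_homogeneous (w : 'I_3 -> nat) (p : A) : Prop :=
  p != 0 /\ exists d : nat, forall m, m \in msupp p -> wdeg w m = d.

Definition in_ideal3 (g1 g2 g3 p : A) : Prop :=
  exists a1 a2 a3 : A, p = a1 * g1 + a2 * g2 + a3 * g3.

(* A_sing := A / <d_x phi, d_y phi, d_z phi> is nonzero and finite dimensional *)
Definition Asing_nonzero (phi : A) : Prop :=
  ~ in_ideal3 (phi^`M(i0)) (phi^`M(i1)) (phi^`M(i2)) 1.
Definition Asing_findim (phi : A) : Prop :=
  exists (n : nat) (s : 'I_n -> A), forall p : A, exists c : 'I_n -> F,
    in_ideal3 (phi^`M(i0)) (phi^`M(i1)) (phi^`M(i2)) (p - \sum_(i < n) c i *: s i).

Definition whis (w : 'I_3 -> nat) (phi : A) : Prop :=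
  weight_homogeneous w phi /\ Asing_nonzero phi /\ Asing_findim phi.

Definition inI (phi p : A) : Prop := exists h : A, p = h * phi.
Definition inIv (phi : A) (v : vec) : Prop := inI phi (c1 v) /\ inI phi (c2 v) /\ inI phi (c3 v).

(* equality in A_phi (resp. A_phi^3) of the projections pi f, pi g *)
Definition eqm (phi f g : A) : Prop := inI phi (f - g).
Definition eqmv (phi : A) (f g : vec) : Prop :=
  eqm phi (c1 f) (c1 g) /\ eqm phi (c2 f) (c2 g) /\ eqm phi (c3 f) (c3 g).

(* the Poisson bracket {f,g}_phi = (grad f x grad g) . grad phi : the unique
   biderivation with {x,y}=phi_z, {y,z}=phi_x, {z,x}=phi_y *)
Definition pbr (phi f g : A) : A := dotv (crossv (grad f) (grad g)) (grad phi).

(* Skew-symmetric k-derivations of A_phi, represented by maps on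
   representatives A^k -> A which are well defined modulo phi and satisfy
   all identities modulo phi. *)
Definition is_der1 (phi : A) (Q : A -> A) : Prop :=
  [/\ forall f f', eqm phi f f' -> eqm phi (Q f) (Q f'),
      forall (a : F) f g, eqm phi (Q (a *: f + g)) (a *: Q f + Q g)
    & forall f g, eqm phi (Q (f * g)) (f * Q g + g * Q f)].

Definition is_der2 (phi : A) (Q : A -> A -> A) : Prop :=
  [/\ forall f f' g, eqm phi f f' -> eqm phi (Q f g) (Q f' g),
      forall (a : F) f g h, eqm phi (Q (a *: f + g) h) (a *: Q f h + Q g h),
      forall f g h, eqm phi (Q (f * g) h) (f * Q g h + g * Q f h)
    & forall f g, eqm phi (Q f g) (- Q g f)].

Definition is_der3 (phi : A) (Q : A -> A -> A -> A) : Prop :=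
  [/\ forall f f' g h, eqm phi f f' -> eqm phi (Q f g h) (Q f' g h),
      forall (a : F) f g h k, eqm phi (Q (a *: f + g) h k) (a *: Q f h k + Q g h k),
      forall f g h k, eqm phi (Q (f * g) h k) (f * Q g h k + g * Q f h k),
      forall f g h, eqm phi (Q f g h) (- Q g f h)
    & forall f g h, eqm phi (Q f g h) (- Q f h g)].

(* Poisson coboundary (computed on representatives, pi is a Poisson morphism) *)
Definition delta0 (phi h : A) : A -> A := fun f0 => pbr phi f0 h.
Definition delta1 (phi : A) (Q : A -> A) : A -> A -> A := fun f0 f1 =>
  pbr phi f0 (Q f1) - pbr phi f1 (Q f0) - Q (pbr phi f0 f1).
Definition delta2 (phi : A) (Q : A -> A -> A) : A -> A -> A -> A := fun f0 f1 f2 =>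
  pbr phi f0 (Q f1 f2) - pbr phi f1 (Q f0 f2) + pbr phi f2 (Q f0 f1)
  - Q (pbr phi f0 f1) f2 + Q (pbr phi f0 f2) f1 - Q (pbr phi f1 f2) f0.

Definition trip1 (Q : A -> A) : vec := mkv (Q vx) (Q vy) (Q vz).
Definition trip2 (Q : A -> A -> A) : vec := mkv (Q vy vz) (Q vz vx) (Q vx vy).

Definition Lvec (phi : A) (f : vec) : vec :=
  addv (oppv (grad (dotv f (grad phi)))) (smulv (Divv f) (grad phi)).

End Defs.

(* Main.v *)
Require Import Defs.
From HB Require Import structures.
From mathcomp Require Import all_boot all_order all_algebra.
From mathcomp Require Import mpoly.
Import GRing.Theory.
Local Open Scope ring_scope.
From mathcomp Require Import ring.
From Stdlib Require Import Setoid Morphisms.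

Section S.
Variable F : fieldType.
Variable phi : {mpoly F[3]}.
Notation A := {mpoly F[3]}.
Lemma inI0 : inI phi 0. Proof. by exists 0; rewrite mul0r. Qed.
Lemma inID {a b} : inI phi a -> inI phi b -> inI phi (a + b).
Proof. by move=> [h1 ->] [h2 ->]; exists (h1 + h2); rewrite mulrDl. Qed.
Lemma inIN {a} : inI phi a -> inI phi (- a).
Proof. by move=> [h1 ->]; exists (- h1); rewrite mulNr. Qed.
Lemma inIM c {a} : inI phi a -> inI phi (c * a).
Proof. by move=> [h1 ->]; exists (c * h1); rewrite mulrA. Qed.
Lemma inIphi c : inI phi (c * phi). Proof. by exists c. Qed.
Lemma eqm_refl a : eqm phi a a. Proof. by rewrite /eqm subrr; apply: inI0. Qed.
Lemma eqm_sym a b : eqm phi a b -> eqm phi b a.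
Proof. by rewrite /eqm => /inIN; rewrite opprB. Qed.
Lemma eqm_trans a b c : eqm phi a b -> eqm phi b c -> eqm phi a c.
Proof. by rewrite /eqm => h1 h2; have := inID h1 h2; rewrite addrA subrK. Qed.
Lemma eqm_eq a b : a = b -> eqm phi a b. Proof. by move->; apply: eqm_refl. Qed.
Lemma eqm0 a : eqm phi a 0 <-> inI phi a. Proof. by rewrite /eqm subr0. Qed.
Lemma inI_eqm a b : inI phi a -> eqm phi b (b + a).
Proof. by rewrite /eqm => /inIN; rewrite opprD addrA subrr add0r. Qed.
End S.
Arguments inID {F phi a b}.
Arguments inIN {F phi a}.
Arguments inIM {F phi} c {a}.

Add Parametric Relation (F : fieldType) (phi : {mpoly F[3]}) : {mpoly F[3]} (eqm phi)
  reflexivity proved by (@eqm_refl F phi)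
  symmetry proved by (@eqm_sym F phi)
  transitivity proved by (@eqm_trans F phi) as eqm_rel.

Add Parametric Morphism (F : fieldType) (phi : {mpoly F[3]}) : (@GRing.add {mpoly F[3]})
  with signature eqm phi ==> eqm phi ==> eqm phi as add_mor.
Proof. move=> a b h c d h'. rewrite /eqm. have := inID h h'. congr inI. ring. Qed.

Add Parametric Morphism (F : fieldType) (phi : {mpoly F[3]}) : (@GRing.mul {mpoly F[3]})
  with signature eqm phi ==> eqm phi ==> eqm phi as mul_mor.
Proof. move=> a b h c d h'. rewrite /eqm. have := inID (inIM c h) (inIM b h'). congr inI. ring. Qed.

Add Parametric Morphism (F : fieldType) (phi : {mpoly F[3]}) : (@GRing.opp {mpoly F[3]})
  with signature eqm phi ==> eqm phi as opp_mor.
Proof. move=> a b h. rewrite /eqm. have := inIN h. congr inI. ring. Qed.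

Add Parametric Morphism (F : fieldType) (phi : {mpoly F[3]}) (c : F) : (@GRing.scale F {mpoly F[3]} c)
  with signature eqm phi ==> eqm phi as scale_mor.
Proof. move=> a b h. rewrite /eqm -!mul_mpolyC. have := inIM c%:MP h. congr inI. ring. Qed.

Ltac vunf := rewrite /pbr /dotv /crossv /grad /trip1 /trip2 /Lvec /addv /oppv /smulv /Divv /c1 /c2 /c3 /mkv /=.

Section Br.
Variable F : fieldType.
Variable phi : {mpoly F[3]}.
Notation A := {mpoly F[3]}.

Lemma pbr_skew f g : pbr phi f g = - pbr phi g f.
Proof. vunf; ring. Qed.
Lemma pbrM f g h : pbr phi f (g * h) = g * pbr phi f h + h * pbr phi f g.
Proof. vunf; rewrite !mderivM; ring. Qed.
Lemma pbrMl f g h : pbr phi (g * h) f = g * pbr phi h f + h * pbr phi g f.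
Proof. vunf; rewrite !mderivM; ring. Qed.
Lemma pbrD f g h : pbr phi f (g + h) = pbr phi f g + pbr phi f h.
Proof. vunf; rewrite !mderivD; ring. Qed.
Lemma pbrDl f g h : pbr phi (g + h) f = pbr phi g f + pbr phi h f.
Proof. vunf; rewrite !mderivD; ring. Qed.
Lemma pbrN f g : pbr phi f (- g) = - pbr phi f g.
Proof. vunf; rewrite !mderivN; ring. Qed.
Lemma pbrNl f g : pbr phi (- g) f = - pbr phi g f.
Proof. vunf; rewrite !mderivN; ring. Qed.
Lemma pbrZ f a g : pbr phi f (a *: g) = a *: pbr phi f g.
Proof. rewrite -!mul_mpolyC; vunf; rewrite !mderivM !mderivC; ring. Qed.
Lemma pbrZl f a g : pbr phi (a *: g) f = a *: pbr phi g f.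
Proof. rewrite -!mul_mpolyC; vunf; rewrite !mderivM !mderivC; ring. Qed.
Lemma pbr_phi f : pbr phi f phi = 0.
Proof. vunf; ring. Qed.
Lemma pbr_phil f : pbr phi phi f = 0.
Proof. vunf; ring. Qed.
Lemma pbr_inI f g : inI phi g -> inI phi (pbr phi f g).
Proof. by move=> [h ->]; rewrite pbrM pbr_phi mulr0 add0r mulrC; apply: inIphi. Qed.
End Br.

Add Parametric Morphism (F : fieldType) (phi : {mpoly F[3]}) : (pbr phi)
  with signature eqm phi ==> eqm phi ==> eqm phi as pbr_mor.
Proof.
move=> a b h c d h'. apply: (@eqm_trans _ _ _ (pbr phi a d)).
  by rewrite /eqm -pbrN -pbrD; apply: pbr_inI.
by rewrite /eqm !(pbr_skew _ _ _ d) -opprD -pbrN -pbrD; apply/inIN/pbr_inI.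
Qed.

Lemma ord3 (i : 'I_3) : i = i0 \/ i = i1 \/ i = i2.
Proof.
case: i => [[|[|[|k]]] Hk]; [left|right;left|right;right|by []]; exact: val_inj.
Qed.
Lemma e01 : (i0 == i1) = false. Proof. by []. Qed.
Lemma e02 : (i0 == i2) = false. Proof. by []. Qed.
Lemma e10 : (i1 == i0) = false. Proof. by []. Qed.
Lemma e12 : (i1 == i2) = false. Proof. by []. Qed.
Lemma e20 : (i2 == i0) = false. Proof. by []. Qed.
Lemma e21 : (i2 == i1) = false. Proof. by []. Qed.

Section Chain.
Variable F : fieldType.
Variable phi : {mpoly F[3]}.
Notation A := {mpoly F[3]}.
Hypothesis h2 : (2%:R : F) != 0.

Lemma dX i j : ('X_i : A)^`M(j) = (i == j)%:R.
Proof.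
rewrite mderivX mnm1E; case: eqP => [<-|_]; last by rewrite scale0r.
have -> : (U_(i) - U_(i))%MM = 0%MM by apply/mnmP => k; rewrite mnmBE subnn mnm0E.
by rewrite mpolyX0 scale1r.
Qed.
Lemma dvx : (vx F)^`M(i0) = 1 :> A /\ (vx F)^`M(i1) = 0 /\ (vx F)^`M(i2) = 0.
Proof. by rewrite /vx !dX eqxx e01 e02. Qed.
Lemma dvy : (vy F)^`M(i0) = 0 :> A /\ (vy F)^`M(i1) = 1 /\ (vy F)^`M(i2) = 0.
Proof. by rewrite /vy !dX eqxx e10 e12. Qed.
Lemma dvz : (vz F)^`M(i0) = 0 :> A /\ (vz F)^`M(i1) = 0 /\ (vz F)^`M(i2) = 1.
Proof. by rewrite /vz !dX eqxx e20 e21. Qed.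
Lemma d1 i : (1 : A)^`M(i) = 0.
Proof. by rewrite -mpolyC1 mderivC. Qed.

Lemma halfm a : eqm phi a (- a) -> eqm phi a 0.
Proof.
rewrite /eqm opprK subr0 => h.
have e : (2^-1)%:MP * (a + a) = a.
  have -> : a + a = (2%:R)%:MP * a by rewrite mpolyC_nat mulr_natl mulr2n.
  by rewrite mulrA -mpolyCM mulVf // mpolyC1 mul1r.
by rewrite -e; apply: inIM.
Qed.

Definition Gr (D : A -> A) p := p^`M(i0) * D (vx F) + p^`M(i1) * D (vy F) + p^`M(i2) * D (vz F).

Lemma chain1 (D : A -> A) :
  (forall a f g, eqm phi (D (a *: f + g)) (a *: D f + D g)) ->
  (forall f g, eqm phi (D (f * g)) (f * D g + g * D f)) ->
  forall p, eqm phi (D p) (Gr D p).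
Proof.
move=> hl hm.
have D0 : eqm phi (D 0) 0.
  have := hl 1 0 0; rewrite !scale1r addr0 /eqm => h.
  by rewrite /eqm; have := inIN h; congr inI; ring.
have DD f g : eqm phi (D (f + g)) (D f + D g) by have := hl 1 f g; rewrite !scale1r.
have DZ a f : eqm phi (D (a *: f)) (a *: D f).
  by have := hl a f 0; rewrite addr0 => h; rewrite h D0 addr0; reflexivity.
have D1 : eqm phi (D 1) 0.
  have := hm 1 1; rewrite mulr1 mul1r /eqm => h.
  by rewrite /eqm; have := inIN h; congr inI; ring.
have PD f g : eqm phi (D f) (Gr D f) -> eqm phi (D g) (Gr D g) -> eqm phi (D (f + g)) (Gr D (f + g)).
  by move=> hf hg; rewrite DD hf hg; apply: eqm_eq; rewrite /Gr !mderivD; ring.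
have PZ a f : eqm phi (D f) (Gr D f) -> eqm phi (D (a *: f)) (Gr D (a *: f)).
  by move=> hf; rewrite DZ hf; apply: eqm_eq; rewrite /Gr !mderivZ -!mul_mpolyC; ring.
have PM f g : eqm phi (D f) (Gr D f) -> eqm phi (D g) (Gr D g) -> eqm phi (D (f * g)) (Gr D (f * g)).
  by move=> hf hg; rewrite hm hf hg; apply: eqm_eq; rewrite /Gr !mderivM; ring.
have P1 : eqm phi (D 1) (Gr D 1) by rewrite D1 /Gr !d1; apply: eqm_eq; ring.
have PX i : eqm phi (D 'X_i) (Gr D 'X_i).
  rewrite /Gr; case: (ord3 i) => [->|[->|->]]; [case: dvx|case: dvy|case: dvz];
   rewrite /vx /vy /vz => -> [-> ->]; apply: eqm_eq; ring.
have PXn i k : eqm phi (D ('X_i ^+ k)) (Gr D ('X_i ^+ k)).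
  by elim: k => [|k ih]; [rewrite expr0 | rewrite exprS; apply: PM].
have PXm m : eqm phi (D 'X_[m]) (Gr D 'X_[m]).
  rewrite mpolyXE_id; apply: (big_ind (fun p => eqm phi (D p) (Gr D p))).
  - exact: P1.
  - by move=> ? ? ? ?; apply: PM.
  - by move=> i _; apply: PXn.
move=> p; elim/mpolyind: p => [|c m p _ _ hp]; first by rewrite D0 /Gr !mderiv0; apply: eqm_eq; ring.
by apply: PD => //; apply: PZ.
Qed.

Definition lin2 (Q : A -> A -> A) := forall a f g h, eqm phi (Q (a *: f + g) h) (a *: Q f h + Q g h).
Definition leib2 (Q : A -> A -> A) := forall f g h, eqm phi (Q (f * g) h) (f * Q g h + g * Q f h).
Definition skew2 (Q : A -> A -> A) := forall f g, eqm phi (Q f g) (- Q g f).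

Lemma chain2 Q : lin2 Q -> leib2 Q -> skew2 Q ->
  forall f g, eqm phi (Q f g) (dotv (crossv (grad f) (grad g)) (trip2 Q)).
Proof.
move=> hl hm hs f g.
have C h : eqm phi (Q h g) (Gr (Q^~ g) h) by apply: chain1 => *; [apply: hl|apply: hm].
have C' a h : eqm phi (Q h a) (Gr (Q^~ a) h) by apply: chain1 => *; [apply: hl|apply: hm].
have Dg a : eqm phi (Q a a) 0 by apply: halfm; apply: hs.
rewrite C /Gr (hs (vx F) g) (hs (vy F) g) (hs (vz F) g) (C' (vx F) g) (C' (vy F) g) (C' (vz F) g) /Gr.
rewrite (Dg (vx F)) (Dg (vy F)) (Dg (vz F)) (hs (vy F) (vx F)) (hs (vz F) (vy F)) (hs (vx F) (vz F)).
apply: eqm_eq; vunf; ring.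
Qed.
End Chain.
Arguments Gr {F}.
Arguments chain1 {F phi} D.
Arguments chain2 {F phi} h2 Q.
Arguments halfm {F phi} h2 a.
Arguments lin2 {F}.
Arguments leib2 {F}.
Arguments skew2 {F}.

Section Kill.
Variable F : fieldType.
Notation A := {mpoly F[3]}.

Lemma mpolyX_neq0 (m : 'X_{1..3}) : 'X_[m] != 0 :> A.
Proof. by apply/eqP => /(congr1 (mcoeff m)); rewrite mcoeffX eqxx mcoeff0 => /eqP; rewrite oner_eq0. Qed.

Definition kill (v : 'I_3) (p : A) : A := p \mPo [tuple (if i == v then 0 else 'X_i) | i < 3].

Lemma killM v p q : kill v (p * q) = kill v p * kill v q.
Proof. exact: rmorphM. Qed.
Lemma killD v p q : kill v (p + q) = kill v p + kill v q.
Proof. exact: comp_mpolyD. Qed.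
Lemma killX v i : kill v 'X_i = if i == v then 0 else 'X_i.
Proof. by rewrite /kill comp_mpolyXU nth_mktuple. Qed.

Lemma kill_dec v p : exists r, p = kill v p + 'X_v * r.
Proof.
elim/mpolyind: p => [|c m p _ _ [r hr]].
  by exists 0; rewrite /kill comp_mpoly0 mulr0 addr0.
rewrite /kill comp_mpolyD comp_mpolyZ comp_mpolyX.
case: (eqVneq (m v) 0%N) => hmv.
  exists r; rewrite [in LHS]hr.
  have -> : \prod_(i < 3) tnth [tuple (if i == v then 0 else 'X_i) | i < 3] i ^+ m i = 'X_[m] :> A.
    rewrite mpolyXE_id; apply: eq_bigr => i _; rewrite tnth_mktuple.
    by case: eqP => [->|//]; rewrite hmv !expr0.
  by rewrite /kill; ring.
exists (c *: 'X_[m - U_(v)] + r).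
have -> : \prod_(i < 3) tnth [tuple (if i == v then 0 else 'X_i) | i < 3] i ^+ m i = 0 :> A.
  rewrite (bigD1 v) //= tnth_mktuple eqxx expr0n (negbTE hmv) mul0r //.
have -> : 'X_[m] = 'X_v * 'X_[m - U_(v)] :> A.
  rewrite -mpolyXD; congr mpolyX; apply/mnmP => i; rewrite mnmDE mnmBE mnm1E.
  by case: eqP => [<-|_]; [rewrite add1n subn1 prednK // lt0n | rewrite add0n subn0].
rewrite [in LHS]hr -!mul_mpolyC /kill; ring.
Qed.

Lemma divX v p : inI ('X_v : A) p <-> kill v p = 0.
Proof.
split=> [[h ->]|h0]; first by rewrite killM killX eqxx mulr0.
by have [r hr] := kill_dec v p; exists r; rewrite hr h0 add0r mulrC.
Qed.

Lemma primeX v a b : inI ('X_v : A) (a * b) -> inI ('X_v : A) a \/ inI ('X_v : A) b.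
Proof.
rewrite !divX killM => /eqP; rewrite mulf_eq0 => /orP[] /eqP; by [left|right].
Qed.

Lemma cancelX (phi : A) v b : ~ inI ('X_v : A) phi -> inI phi ('X_v * b) -> inI phi b.
Proof.
move=> hn [h hh].
have : inI ('X_v : A) (h * phi) by rewrite -hh mulrC; exists b.
case/primeX => [[h' eh]|//].
exists h'; apply: (mulfI (mpolyX_neq0 U_(v))).
by rewrite hh eh; ring.
Qed.

Lemma cancelXn (phi : A) v b k : ~ inI ('X_v : A) phi -> inI phi ('X_v ^+ k * b) -> inI phi b.
Proof.
move=> hn; elim: k b => [|k ih] b; first by rewrite expr0 mul1r.
by rewrite exprS -mulrA => /(cancelX _ _ _ hn) /ih.
Qed.
End Kill.
Arguments kill {F}.
Arguments killM {F}.
Arguments killD {F}.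
Arguments killX {F}.
Arguments divX {F}.
Arguments mpolyX_neq0 {F}.

Section Grade.
Variable F : fieldType.
Notation A := {mpoly F[3]}.
Variable w : 'I_3 -> nat.

Definition H e (p : A) : A := \sum_(m <- msupp p | wdeg w m == e) p@_m *: 'X_[m].

Lemma Hc e p m : (H e p)@_m = if wdeg w m == e then p@_m else 0.
Proof.
rewrite /H linear_sum /= big_mkcond /=.
have E m' : (if wdeg w m' == e then (p@_m' *: 'X_[m'])@_m else 0)
    = if (wdeg w m' == e) && (m' == m) then p@_m' else 0.
  by rewrite mcoeffZ mcoeffX; case: (wdeg w m' == e); case: eqP => //= _; rewrite ?mulr1 ?mulr0.
rewrite (eq_bigr _ (fun m' _ => E m')).
case: (boolP (m \in msupp p)) => hm.
  rewrite (bigD1_seq m) ?msupp_uniq //= eqxx andbT big1 ?addr0 //.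
  by move=> m' /negbTE ->; rewrite andbF.
rewrite big1_seq; last first.
  move=> m' /andP[_ hm']; case: ifP => // /andP[_ /eqP em].
  by move: hm; rewrite -em hm'.
by rewrite memN_msupp_eq0 //; case: ifP.
Qed.

Lemma wdegD m1 m2 : wdeg w (m1 + m2)%MM = (wdeg w m1 + wdeg w m2)%N.
Proof. by rewrite /wdeg -big_split; apply: eq_bigr => i _; rewrite mnmDE mulnDr. Qed.

Lemma wdegU i : wdeg w U_(i)%MM = w i.
Proof.
rewrite /wdeg (bigD1 i) //= mnm1E eqxx muln1 big1 ?addn0 // => j /negbTE hj.
by rewrite mnm1E eq_sym hj muln0.
Qed.

Lemma wdegUn i k : wdeg w (U_(i) *+ k)%MM = (k * w i)%N.
Proof.
rewrite /wdeg.
have E j : (U_(i) *+ k)%MM j = ((i == j) * k)%N by rewrite mulmnE mnm1E.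
under eq_bigr => j _ do rewrite E.
rewrite (bigD1 i) // eqxx mul1n big1.
  by rewrite /= addn0 mulnC.
by move=> j /negbTE hj; rewrite eq_sym hj mul0n muln0.
Qed.

Definition whomog d (p : A) := forall m, p@_m != 0 -> wdeg w m = d.

Lemma H_hom d e p : whomog d p -> H e p = if d == e then p else 0.
Proof.
move=> hp; apply/mpolyP => m; rewrite Hc.
have [hm0|hm] := eqVneq (p@_m) 0.
  by case: (d == e); rewrite ?mcoeff0 hm0 if_same.
by rewrite (hp m hm); case: (d == e); rewrite ?mcoeff0.
Qed.

Lemma HD e p q : H e (p + q) = H e p + H e q.
Proof. by apply/mpolyP => m; rewrite mcoeffD !Hc mcoeffD; case: ifP; rewrite ?addr0. Qed.
Lemma HZ e c p : H e (c *: p) = c *: H e p.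
Proof. by apply/mpolyP => m; rewrite mcoeffZ !Hc mcoeffZ; case: ifP; rewrite ?mulr0. Qed.
Lemma H0 e : H e 0 = 0.
Proof. by apply/mpolyP => m; rewrite Hc mcoeff0; case: ifP. Qed.

Lemma homX m : whomog (wdeg w m) 'X_[m].
Proof. move=> k; rewrite mcoeffX; case: (m =P k) => [->//|_]; by rewrite eqxx. Qed.

Lemma homMX m g dg : whomog dg g -> whomog (wdeg w m + dg) ('X_[m] * g).
Proof.
move=> hg k; rewrite -mcoeff_msupp mulrC (perm_mem (msuppMX g m)).
case/mapP => m' hm' ->; rewrite wdegD (hg m') //.
by rewrite mcoeff_msupp in hm'.
Qed.

Lemma H_mul a g dg e : whomog dg g ->
  H e (a * g) = if (dg <= e)%N then H (e - dg)%N a * g else 0.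
Proof.
move=> hg; elim/mpolyind: a => [|c m a _ _ ih].
  by rewrite mul0r H0; case: ifP; rewrite ?H0 ?mul0r.
rewrite mulrDl HD ih -scalerAl HZ (H_hom _ _ _ (homMX m _ _ hg)) HD HZ (H_hom _ _ _ (homX m)).
case: (leqP dg e) => hle.
  have -> : ((wdeg w m + dg)%N == e) = (wdeg w m == (e - dg)%N).
    by apply/eqP/eqP => [<-|->]; [rewrite addnK|rewrite subnK].
  by case: eqP => _; rewrite ?scaler0 ?add0r // mulrDl -scalerAl.
by rewrite gtn_eqF ?(leq_trans hle (leq_addl _ _)) // scaler0 addr0.
Qed.

Lemma hom_deriv d p i : whomog d p -> whomog (d - w i)%N (p^`M(i)).
Proof.
move=> hp m; rewrite mcoeff_deriv => h.
have h' : p@_(m + U_(i)) != 0 by apply: contraNneq h => ->; rewrite mul0rn.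
by have := hp _ h'; rewrite wdegD wdegU => <-; rewrite addnK.
Qed.

Lemma homXn v k : whomog (k * w v) ('X_v ^+ k).
Proof. by rewrite mpolyXn -wdegUn; apply: homX. Qed.
End Grade.
Arguments H {F}.
Arguments whomog {F}.
Arguments Hc {F w}.
Arguments H_hom {F w}.
Arguments HD {F w}.
Arguments HZ {F w}.
Arguments H0 {F w}.
Arguments homX {F w}.
Arguments homMX {F w}.
Arguments H_mul {F w}.
Arguments hom_deriv {F w}.
Arguments homXn {F}.

Section Depth.
Variable F : fieldType.
Notation A := {mpoly F[3]}.
Variable w : 'I_3 -> nat.
Variable phi : A.
Hypothesis hw : forall i, (0 < w i)%N.
Hypothesis hwh : weight_homogeneous w phi.
Hypothesis hfin : Asing_findim phi.

Notation J := (in_ideal3 (phi^`M(i0)) (phi^`M(i1)) (phi^`M(i2))).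

Lemma J0 : J 0. Proof. by exists 0, 0, 0; rewrite !mul0r !addr0. Qed.
Lemma JD p q : J p -> J q -> J (p + q).
Proof.
move=> [a1 [a2 [a3 ->]]] [b1 [b2 [b3 ->]]]; exists (a1 + b1), (a2 + b2), (a3 + b3); ring.
Qed.
Lemma JM c p : J p -> J (c * p).
Proof. move=> [a1 [a2 [a3 ->]]]; exists (c * a1), (c * a2), (c * a3); ring. Qed.
Lemma JZ c p : J p -> J (c *: p).
Proof. by rewrite -mul_mpolyC; apply: JM. Qed.
Lemma Jsum (I : Type) (r : seq I) (f : I -> A) : (forall i, J (f i)) -> J (\sum_(i <- r) f i).
Proof. by move=> h; elim/big_ind: _ => //; [apply: J0 | apply: JD]. Qed.

Lemma H_mul' e (a g : A) dg : whomog w dg g ->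
  H w e (a * g) = (if (dg <= e)%N then H w (e - dg)%N a else 0) * g.
Proof. by move=> hg; rewrite (H_mul _ _ _ _ hg); case: ifP; rewrite ?mul0r. Qed.

Lemma phi_hom : exists d, whomog w d phi.
Proof.
case: hwh => _ [d hd]; exists d => m hm; apply: hd; by rewrite mcoeff_msupp.
Qed.

Lemma JH e p : J p -> J (H w e p).
Proof.
have [d hd] := phi_hom.
move=> [a1 [a2 [a3 ->]]].
rewrite !HD !(H_mul' _ _ _ _ (hom_deriv _ _ _ hd)).
by eexists; eexists; eexists.
Qed.

Lemma H_sum e (I : Type) (r : seq I) (f : I -> A) :
  H w e (\sum_(i <- r) f i) = \sum_(i <- r) H w e (f i).
Proof. exact: (big_morph (H w e) (HD e) (H0 e)). Qed.

Lemma univ v : exists k, J ('X_v ^+ k).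
Proof.
case: hfin => n [s hs].
have [c hc] := fin_all_exists (fun j : 'I_n.+1 => hs ('X_v ^+ j)).
pose M : 'M[F]_(n.+1, n) := \matrix_(j, i) c j i.
have : kermx M != 0.
  rewrite kermx_eq0 /row_free; apply/eqP => h.
  by have := rank_leq_col M; rewrite h ltnn.
case/rowV0Pn => a ha anz; rewrite sub_kermx in ha.
have [j0 hj0] : exists j, a ord0 j != 0.
  case: (pickP (fun j => a ord0 j != 0)) => [j hj|h]; first by exists j.
  move/eqP: anz; case; apply/rowP => j; rewrite mxE; apply/eqP; exact: negbFE (h j).
have Z i : \sum_j a ord0 j * c j i = 0.
  have := congr1 (fun B : 'M[F]_(1, n) => B ord0 i) (eqP ha); rewrite !mxE => h.
  by rewrite -[RHS]h; apply: eq_bigr => j _; rewrite mxE.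
have ZZ : \sum_j a ord0 j *: \sum_(i < n) c j i *: s i = 0.
  under eq_bigr => j _ do rewrite scaler_sumr.
  rewrite exchange_big /=.
  under eq_bigr => i _ do (under eq_bigr => j _ do rewrite scalerA; rewrite -scaler_suml Z scale0r).
  by rewrite big1.
have JP : J (\sum_j a ord0 j *: 'X_v ^+ j).
  have -> : \sum_j a ord0 j *: 'X_v ^+ j =
      \sum_j a ord0 j *: ('X_v ^+ j - \sum_(i < n) c j i *: s i) by
    under [RHS]eq_bigr => j _ do rewrite scalerBr; rewrite sumrB ZZ subr0.
  by apply: Jsum => j; apply: JZ.
have := JH (j0 * w v)%N _ JP; rewrite H_sum.
rewrite (bigD1 j0) //= big1 ?addr0; last first.
  move=> j hj; rewrite HZ (H_hom _ _ _ (homXn w v j)).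
  by rewrite eqn_pmul2r ?hw // (negbTE hj : (nat_of_ord j == j0) = false) scaler0.
rewrite HZ (H_hom _ _ _ (homXn w v j0)) eqxx => h.
by exists j0; have := JZ (a ord0 j0)^-1 _ h; rewrite scalerA mulVf // scale1r.
Qed.

Lemma kill0 v : kill v (0 : A) = 0. Proof. exact: comp_mpoly0. Qed.

Lemma notall : exists v, ~ inI ('X_v : A) phi.
Proof.
case: (eqVneq (kill i0 phi) 0) => h0; last by exists i0; rewrite divX; apply/eqP.
case: (eqVneq (kill i1 phi) 0) => h1; last by exists i1; rewrite divX; apply/eqP.
case: (eqVneq (kill i2 phi) 0) => h2; last by exists i2; rewrite divX; apply/eqP.
exfalso.
have [a ea] : inI ('X_i0 : A) phi by rewrite divX.
have : kill i1 a = 0.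
  move: h1; rewrite ea killM killX e01 => /eqP; rewrite mulf_eq0 (negbTE (mpolyX_neq0 _)) orbF.
  by move/eqP.
rewrite -divX => -[b eb].
have : kill i2 b = 0.
  move: h2; rewrite ea eb !killM !killX e02 e12 => /eqP.
  rewrite !mulf_eq0 !(negbTE (mpolyX_neq0 _)) !orbF.
  by move/eqP.
rewrite -divX => -[c ec].
have ephi : phi = c * 'X_i2 * 'X_i1 * 'X_i0 by rewrite ea eb ec.
have [k hk] := univ i2.
pose kk (p : A) := kill i1 (kill i0 p).
have kkM (p q : A) : kk (p * q) = kk p * kk q by rewrite /kk !killM.
have kkD (p q : A) : kk (p + q) = kk p + kk q by rewrite /kk !killD.
have kk0 : kk 'X_i0 = 0 by rewrite /kk killX eqxx kill0.
have kk1 : kk 'X_i1 = 0 by rewrite /kk killX e10 killX eqxx.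
have kk2 : kk 'X_i2 = 'X_i2 by rewrite /kk killX e20 killX e21.
have kkd j : kk (phi^`M(j)) = 0.
  by rewrite ephi !mderivM !kkD !kkM kk0 kk1 !mulr0 !mul0r addr0.
have kkX : kk ('X_i2 ^+ k) = 'X_i2 ^+ k.
  elim: k {hk} => [|k ih]; first by rewrite !expr0 /kk /kill !comp_mpoly1.
  by rewrite !exprS kkM ih kk2.
case: hk => b1 [b2 [b3 e]].
have := congr1 kk e; rewrite kkX !kkD !kkM !kkd !mulr0 !addr0 => /eqP.
by rewrite mpolyXn (negbTE (mpolyX_neq0 _)).
Qed.

Lemma depth q : inI phi (q * phi^`M(i0)) -> inI phi (q * phi^`M(i1)) ->
  inI phi (q * phi^`M(i2)) -> inI phi q.
Proof.
move=> h0 h1 h2.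
have qJ p : J p -> inI phi (q * p).
  move=> [a1 [a2 [a3 ->]]].
  have -> : q * (a1 * phi^`M(i0) + a2 * phi^`M(i1) + a3 * phi^`M(i2)) =
    a1 * (q * phi^`M(i0)) + a2 * (q * phi^`M(i1)) + a3 * (q * phi^`M(i2)) by ring.
  by apply: inID; [apply: inID|]; apply: inIM.
have [v nv] := notall.
have [k hk] := univ v.
apply: (@cancelXn _ phi v q k nv).
by rewrite mulrC; apply: qJ.
Qed.
End Depth.

Section D1.
Variable F : fieldType.
Variable phi : {mpoly F[3]}.
Notation A := {mpoly F[3]}.
Hypothesis h2 : (2%:R : F) != 0.
Local Notation x_ := (vx F).
Local Notation y_ := (vy F).
Local Notation z_ := (vz F).

Ltac dv := rewrite ?(proj1 (dvx F)) ?(proj1 (proj2 (dvx F))) ?(proj2 (proj2 (dvx F)))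
  ?(proj1 (dvy F)) ?(proj1 (proj2 (dvy F))) ?(proj2 (proj2 (dvy F)))
  ?(proj1 (dvz F)) ?(proj1 (proj2 (dvz F))) ?(proj2 (proj2 (dvz F))).

Lemma eqm_phi0 : eqm phi phi 0.
Proof. by rewrite /eqm subr0; exists 1; rewrite mul1r. Qed.

Lemma der1_chain {Q : A -> A} : is_der1 phi Q -> forall p, eqm phi (Q p) (Gr Q p).
Proof. by case=> _ hl hm; apply: chain1. Qed.

Lemma Gr_dot (Q : A -> A) p : Gr Q p = dotv (trip1 Q) (grad p).
Proof. rewrite /Gr; vunf; ring. Qed.

Lemma der1_phi {Q : A -> A} : is_der1 phi Q -> inI phi (dotv (trip1 Q) (grad phi)).
Proof.
move=> hQ; have := der1_chain hQ phi; rewrite Gr_dot => h.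
have h0 : eqm phi (Q phi) 0.
  have [wd _ _] := hQ; rewrite (wd _ _ eqm_phi0) (der1_chain hQ 0).
  by apply: eqm_eq; rewrite /Gr !mderiv0; ring.
by apply/eqm0; rewrite -h.
Qed.

Definition Qof1 (f : vec F) : A -> A := fun g => dotv f (grad g).

Lemma Qof1_der (f : vec F) : inI phi (dotv f (grad phi)) -> is_der1 phi (Qof1 f).
Proof.
move=> hf; split.
- move=> g g' [h eh]; rewrite /eqm /Qof1.
  have -> : dotv f (grad g) - dotv f (grad g') = dotv f (grad (g - g')).
    by vunf; rewrite !mderivB; ring.
  rewrite eh; have -> : dotv f (grad (h * phi)) = h * dotv f (grad phi) + phi * dotv f (grad h).
    by vunf; rewrite !mderivM; ring.
  apply: inID; first exact: inIM.
  by rewrite mulrC; apply: inIphi.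
- move=> a g g'; apply: eqm_eq; rewrite /Qof1; vunf; rewrite !mderivD !mderivZ -!mul_mpolyC; ring.
- move=> g g'; apply: eqm_eq; rewrite /Qof1; vunf; rewrite !mderivM; ring.
Qed.

Lemma trip1_Qof1 (f : vec F) : trip1 (Qof1 f) = f.
Proof.
rewrite /trip1 /Qof1; vunf; dv. case: f => [[f1 f2] f3] /=. congr (_, _, _); ring.
Qed.

Lemma der1_unique {Q Q' : A -> A} : is_der1 phi Q -> is_der1 phi Q' ->
  eqmv phi (trip1 Q) (trip1 Q') -> forall g, eqm phi (Q g) (Q' g).
Proof.
move=> hQ hQ' [e1 [e2 e3]] g.
rewrite (der1_chain hQ) (der1_chain hQ') /Gr.
rewrite /trip1 /c1 /c2 /c3 /mkv /= in e1 e2 e3.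
by rewrite e1 e2 e3; reflexivity.
Qed.
End D1.
Arguments der1_chain {F phi Q}.
Arguments der1_phi {F phi Q}.
Arguments der1_unique {F phi Q Q'}.
Arguments eqm_phi0 {F phi}.
Arguments Qof1 {F}.
Arguments Qof1_der {F phi}.
Arguments trip1_Qof1 {F}.

Ltac dvF F := rewrite ?(proj1 (dvx F)) ?(proj1 (proj2 (dvx F))) ?(proj2 (proj2 (dvx F)))
  ?(proj1 (dvy F)) ?(proj1 (proj2 (dvy F))) ?(proj2 (proj2 (dvy F)))
  ?(proj1 (dvz F)) ?(proj1 (proj2 (dvz F))) ?(proj2 (proj2 (dvz F))).

Section D2.
Variable F : fieldType.
Variable phi : {mpoly F[3]}.
Notation A := {mpoly F[3]}.
Hypothesis h2 : (2%:R : F) != 0.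
Local Notation x_ := (vx F).
Local Notation y_ := (vy F).
Local Notation z_ := (vz F).

Lemma der2_chain {Q : A -> A -> A} : is_der2 phi Q ->
  forall f g, eqm phi (Q f g) (dotv (crossv (grad f) (grad g)) (trip2 Q)).
Proof. by case=> _ hl hm hs; apply: (chain2 h2). Qed.

Lemma der2_0 {Q : A -> A -> A} : is_der2 phi Q -> forall g, eqm phi (Q phi g) 0.
Proof.
move=> hQ g; have [wd _ _ _] := hQ.
rewrite (wd _ _ _ eqm_phi0) (der2_chain hQ).
by apply: eqm_eq; vunf; rewrite !mderiv0; ring.
Qed.

Lemma der2_phi {Q : A -> A -> A} : is_der2 phi Q -> inIv phi (crossv (trip2 Q) (grad phi)).
Proof.
move=> hQ.
have := der2_0 hQ x_; have := der2_0 hQ y_; have := der2_0 hQ z_.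
rewrite !(der2_chain hQ) /eqm !subr0 => h3 h2' h1.
split; [|split].
- by move: h1; congr inI; vunf; dvF F; ring.
- by move: h2'; congr inI; vunf; dvF F; ring.
- by move: h3; congr inI; vunf; dvF F; ring.
Qed.

Definition Qof2 (p : vec F) : A -> A -> A := fun f g => dotv (crossv (grad f) (grad g)) p.

Lemma Qof2_der (p : vec F) : inIv phi (crossv p (grad phi)) -> is_der2 phi (Qof2 p).
Proof.
move=> [hp1 [hp2 hp3]]; split.
- move=> f f' g [h eh]; rewrite /eqm /Qof2.
  have -> : dotv (crossv (grad f) (grad g)) p - dotv (crossv (grad f') (grad g)) p
      = dotv (crossv (grad (f - f')) (grad g)) p by vunf; rewrite !mderivB; ring.
  rewrite eh.
  have -> : dotv (crossv (grad (h * phi)) (grad g)) p =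
     h * (g^`M(i0) * c1 (crossv p (grad phi)) + g^`M(i1) * c2 (crossv p (grad phi))
          + g^`M(i2) * c3 (crossv p (grad phi)))
     + phi * dotv (crossv (grad h) (grad g)) p by vunf; rewrite !mderivM; ring.
  apply: inID; last by rewrite mulrC; apply: inIphi.
  by apply: inIM; apply: inID; [apply: inID|]; apply: inIM.
- move=> a f g h; apply: eqm_eq; rewrite /Qof2; vunf; rewrite !mderivD !mderivZ -!mul_mpolyC; ring.
- move=> f g h; apply: eqm_eq; rewrite /Qof2; vunf; rewrite !mderivM; ring.
- move=> f g; apply: eqm_eq; rewrite /Qof2; vunf; ring.
Qed.

Lemma trip2_Qof2 (p : vec F) : trip2 (Qof2 p) = p.
Proof.
rewrite /trip2 /Qof2; vunf; dvF F. case: p => [[p1 p2] p3] /=. congr (_, _, _); ring.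
Qed.

Lemma der2_unique {Q Q' : A -> A -> A} : is_der2 phi Q -> is_der2 phi Q' ->
  eqmv phi (trip2 Q) (trip2 Q') -> forall g h, eqm phi (Q g h) (Q' g h).
Proof.
move=> hQ hQ' [e1 [e2 e3]] g h.
rewrite (der2_chain hQ) (der2_chain hQ').
rewrite /trip2 /c1 /c2 /c3 /mkv /= in e1 e2 e3.
rewrite /trip2 /dotv /c1 /c2 /c3 /mkv /=.
by rewrite e1 e2 e3; reflexivity.
Qed.

Lemma H0_iff (f : A) : (forall g, eqm phi (delta0 phi f g) 0) <-> inIv phi (crossv (grad f) (grad phi)).
Proof.
rewrite /delta0; split.
- move=> h; have := h x_; have := h y_; have := h z_; rewrite /eqm !subr0 => h3 h2' h1.
  split; [|split].
  + by move: h1; congr inI; vunf; dvF F; ring.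
  + by move: h2'; congr inI; vunf; dvF F; ring.
  + by move: h3; congr inI; vunf; dvF F; ring.
- move=> [hp1 [hp2 hp3]] g; rewrite /eqm subr0.
  have -> : pbr phi g f = g^`M(i0) * c1 (crossv (grad f) (grad phi))
      + g^`M(i1) * c2 (crossv (grad f) (grad phi)) + g^`M(i2) * c3 (crossv (grad f) (grad phi)).
    by vunf; ring.
  by apply: inID; [apply: inID|]; apply: inIM.
Qed.

Ltac nd := rewrite ?(mderiv_comm i1 i0) ?(mderiv_comm i2 i0) ?(mderiv_comm i2 i1).

Lemma Lcomp {Q : A -> A} : is_der1 phi Q ->
  [/\ eqm phi (delta1 phi Q y_ z_) (c1 (Lvec phi (trip1 Q))),
      eqm phi (delta1 phi Q z_ x_) (c2 (Lvec phi (trip1 Q)))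
    & eqm phi (delta1 phi Q x_ y_) (c3 (Lvec phi (trip1 Q)))].
Proof.
move=> hQ; rewrite /delta1.
have -> : pbr phi y_ z_ = phi^`M(i0) by vunf; dvF F; ring.
have -> : pbr phi z_ x_ = phi^`M(i1) by vunf; dvF F; ring.
have -> : pbr phi x_ y_ = phi^`M(i2) by vunf; dvF F; ring.
split.
- rewrite (der1_chain hQ (phi^`M(i0))) /Gr; apply: eqm_eq; vunf; dvF F; rewrite !mderivD !mderivM; vunf; rewrite ?mderivD ?mderivM; nd; ring.
- rewrite (der1_chain hQ (phi^`M(i1))) /Gr; apply: eqm_eq; vunf; dvF F; rewrite !mderivD !mderivM; vunf; rewrite ?mderivD ?mderivM; nd; ring.
- rewrite (der1_chain hQ (phi^`M(i2))) /Gr; apply: eqm_eq; vunf; dvF F; rewrite !mderivD !mderivM; vunf; rewrite ?mderivD ?mderivM; nd; ring.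
Qed.
End D2.

Section Z3.
Variable F : fieldType.
Variable phi : {mpoly F[3]}.
Notation A := {mpoly F[3]}.
Hypothesis h2 : (2%:R : F) != 0.
Hypothesis dep : forall q : A, inI phi (q * phi^`M(i0)) -> inI phi (q * phi^`M(i1)) ->
  inI phi (q * phi^`M(i2)) -> inI phi q.
Local Notation x_ := (vx F).
Local Notation y_ := (vy F).
Local Notation z_ := (vz F).

Lemma der3_zero (Q : A -> A -> A -> A) :
  (forall f f' g h, eqm phi f f' -> eqm phi (Q f g h) (Q f' g h)) ->
  (forall (a : F) f g h k, eqm phi (Q (a *: f + g) h k) (a *: Q f h k + Q g h k)) ->
  (forall f g h k, eqm phi (Q (f * g) h k) (f * Q g h k + g * Q f h k)) ->
  (forall f g h, eqm phi (Q f g h) (- Q g f h)) ->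
  (forall f g h, eqm phi (Q f g h) (- Q f h g)) ->
  forall f g h, eqm phi (Q f g h) 0.
Proof.
move=> wd hl hm s12 s23.
have C1 g h p : eqm phi (Q p g h) (Gr (fun f => Q f g h) p).
  by apply: chain1 => *; [apply: hl|apply: hm].
have D12 a h : eqm phi (Q a a h) 0 by apply: (halfm h2); apply: s12.
have D23 f a : eqm phi (Q f a a) 0 by apply: (halfm h2); apply: s23.
have C2 k g h : eqm phi (Q k g h) (dotv (crossv (grad g) (grad h)) (trip2 (Q k))).
  apply: (chain2 h2).
  - move=> a f g' h'; rewrite (s12 k) hl (s12 f) (s12 g'); apply: eqm_eq.
    by rewrite -!mul_mpolyC; ring.
  - move=> f g' h'; rewrite (s12 k) hm (s12 _ k) (s12 _ k); apply: eqm_eq; ring.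
  - by move=> f g'; apply: s23.
have Q0 g h : eqm phi (Q 0 g h) 0.
  by rewrite C1; apply: eqm_eq; rewrite /Gr !mderiv0; ring.
have Qphi g h : eqm phi (Q phi g h) 0 by rewrite (wd _ _ _ _ eqm_phi0) Q0; reflexivity.
have Eyzx : eqm phi (Q y_ z_ x_) (Q x_ y_ z_).
  rewrite (s12 y_) (s23 z_) (s12 z_) (s23 x_ z_); apply: eqm_eq; ring.
have Ezxy : eqm phi (Q z_ x_ y_) (Q x_ y_ z_).
  rewrite (s12 z_) (s23 x_ z_); apply: eqm_eq; ring.
have Exzx : eqm phi (Q x_ z_ x_) 0 by rewrite s23 D12; apply: eqm_eq; ring.
have Ezyz : eqm phi (Q z_ y_ z_) 0 by rewrite s23 D12; apply: eqm_eq; ring.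
have Eyxy : eqm phi (Q y_ x_ y_) 0 by rewrite s23 D12; apply: eqm_eq; ring.
have hr : eqm phi (Q x_ y_ z_) 0.
  apply/eqm0; apply: dep; apply/eqm0; rewrite mulrC.
  - have e := Qphi y_ z_; rewrite (C1 y_ z_ phi) /Gr (D12 y_) Ezyz in e.
    by eapply eqm_trans; [|exact: e]; apply: eqm_eq; ring.
  - have e := Qphi z_ x_; rewrite (C1 z_ x_ phi) /Gr Exzx (D12 z_) Eyzx in e.
    by eapply eqm_trans; [|exact: e]; apply: eqm_eq; ring.
  - have e := Qphi x_ y_; rewrite (C1 x_ y_ phi) /Gr (D12 x_) Eyxy Ezxy in e.
    by eapply eqm_trans; [|exact: e]; apply: eqm_eq; ring.
move=> f g h.
rewrite C1 /Gr (C2 x_) (C2 y_) (C2 z_) /trip2 /dotv /c1 /c2 /c3 /mkv /=.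
rewrite ?Eyzx ?Ezxy ?Exzx ?Ezyz ?Eyxy ?(D23 x_ x_) ?(D23 y_ y_) ?(D23 z_ z_).
rewrite ?(D12 x_) ?(D12 y_) ?(D12 z_) ?hr.
apply: eqm_eq; ring.
Qed.
End Z3.

Section Del1.
Variable F : fieldType.
Variable phi : {mpoly F[3]}.
Notation A := {mpoly F[3]}.
Variable Q : A -> A.
Hypothesis hQ : is_der1 phi Q.

Let wd := let: And3 x _ _ := hQ in x.
Let hl := let: And3 _ x _ := hQ in x.
Let hm := let: And3 _ _ x := hQ in x.

Instance Q_Proper : Proper (eqm phi ==> eqm phi) Q.
Proof. by move=> a b h; apply: wd. Qed.

Lemma Q1_0 : eqm phi (Q 0) 0.
Proof.
have := hl 1 0 0; rewrite !scale1r addr0 /eqm => h.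
by have := inIN h; congr inI; ring.
Qed.
Lemma Q1D u v : eqm phi (Q (u + v)) (Q u + Q v).
Proof. by have := hl 1 u v; rewrite !scale1r. Qed.
Lemma Q1N u : eqm phi (Q (- u)) (- Q u).
Proof.
have := hl (-1) u 0; rewrite addr0 scaleN1r => ->.
by rewrite Q1_0 addr0 scaleN1r; reflexivity.
Qed.

Lemma eqm_D1 a1 a2 a3 b1 b2 b3 :
  eqm phi a1 b1 -> eqm phi a2 b2 -> eqm phi a3 b3 -> eqm phi (a1 - a2 - a3) (b1 - b2 - b3).
Proof.
rewrite /eqm => h1 h2 h3.
have := inID (inID h1 (inIN h2)) (inIN h3).
by congr inI; ring.
Qed.

Lemma delta1_lin2 : lin2 phi (delta1 phi Q).
Proof.
move=> a f g h; rewrite /delta1; eapply eqm_trans; first apply: eqm_D1.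
- by rewrite pbrDl pbrZl; reflexivity.
- by rewrite hl pbrD pbrZ; reflexivity.
- by rewrite pbrDl pbrZl hl; reflexivity.
by apply: eqm_eq; rewrite -!mul_mpolyC; ring.
Qed.

Lemma delta1_leib2 : leib2 phi (delta1 phi Q).
Proof.
move=> f g h; rewrite /delta1; eapply eqm_trans; first apply: eqm_D1.
- by rewrite pbrMl; reflexivity.
- by rewrite hm pbrD !pbrM; reflexivity.
- by rewrite pbrMl Q1D !hm; reflexivity.
by apply: eqm_eq; rewrite !(pbr_skew _ _ h); ring.
Qed.

Lemma delta1_skew2 : skew2 phi (delta1 phi Q).
Proof.
move=> f g; rewrite /delta1 (pbr_skew _ _ g f) Q1N.
by apply: eqm_eq; ring.
Qed.
End Del1.

Section Del2.
Variable F : fieldType.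
Variable phi : {mpoly F[3]}.
Notation A := {mpoly F[3]}.
Variable Q : A -> A -> A.
Hypothesis hQ : is_der2 phi Q.

Let wd := let: And4 x _ _ _ := hQ in x.
Let hl := let: And4 _ x _ _ := hQ in x.
Let hm := let: And4 _ _ x _ := hQ in x.
Let hs := let: And4 _ _ _ x := hQ in x.

Lemma Q2_0 h : eqm phi (Q 0 h) 0.
Proof.
have := hl 1 0 0 h; rewrite !scale1r addr0 /eqm => e.
by have := inIN e; congr inI; ring.
Qed.
Lemma Q2D u v h : eqm phi (Q (u + v) h) (Q u h + Q v h).
Proof. by have := hl 1 u v h; rewrite !scale1r. Qed.
Lemma Q2N u h : eqm phi (Q (- u) h) (- Q u h).
Proof.
have := hl (-1) u 0 h; rewrite addr0 scaleN1r => ->.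
by rewrite Q2_0 addr0 scaleN1r; reflexivity.
Qed.
Lemma Q2wd2 f g g' : eqm phi g g' -> eqm phi (Q f g) (Q f g').
Proof. by move=> e; rewrite (hs f g) (hs f g') (wd _ _ _ e); reflexivity. Qed.

Instance Q2_Proper : Proper (eqm phi ==> eqm phi ==> eqm phi) Q.
Proof.
move=> a b e c d e'; apply: eqm_trans (wd _ _ _ e) _; exact: Q2wd2.
Qed.

Lemma Q2lin2 f a u v : eqm phi (Q f (a *: u + v)) (a *: Q f u + Q f v).
Proof.
rewrite (hs f) hl (hs u f) (hs v f); apply: eqm_eq; rewrite -!mul_mpolyC; ring.
Qed.
Lemma Q2M2 f u v : eqm phi (Q f (u * v)) (u * Q f v + v * Q f u).
Proof. rewrite (hs f) hm (hs u f) (hs v f); apply: eqm_eq; ring. Qed.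

Lemma delta2_wd f f' g h : eqm phi f f' -> eqm phi (delta2 phi Q f g h) (delta2 phi Q f' g h).
Proof. by move=> e; rewrite /delta2 e; reflexivity. Qed.

Lemma eqm_D2 a1 a2 a3 a4 a5 a6 b1 b2 b3 b4 b5 b6 :
  eqm phi a1 b1 -> eqm phi a2 b2 -> eqm phi a3 b3 -> eqm phi a4 b4 -> eqm phi a5 b5 -> eqm phi a6 b6 ->
  eqm phi (a1 - a2 + a3 - a4 + a5 - a6) (b1 - b2 + b3 - b4 + b5 - b6).
Proof.
rewrite /eqm => h1 h2 h3 h4 h5 h6.
have := inID (inID (inID (inID (inID h1 (inIN h2)) h3) (inIN h4)) h5) (inIN h6).
by congr inI; ring.
Qed.

Lemma delta2_lin a f g h k :
  eqm phi (delta2 phi Q (a *: f + g) h k) (a *: delta2 phi Q f h k + delta2 phi Q g h k).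
Proof.
rewrite /delta2; eapply eqm_trans; first apply: eqm_D2.
- by rewrite pbrDl pbrZl; reflexivity.
- by rewrite hl pbrD pbrZ; reflexivity.
- by rewrite hl pbrD pbrZ; reflexivity.
- by rewrite pbrDl pbrZl hl; reflexivity.
- by rewrite pbrDl pbrZl hl; reflexivity.
- by rewrite Q2lin2; reflexivity.
by apply: eqm_eq; rewrite -!mul_mpolyC; ring.
Qed.

Lemma delta2_leib f g h k :
  eqm phi (delta2 phi Q (f * g) h k) (f * delta2 phi Q g h k + g * delta2 phi Q f h k).
Proof.
rewrite /delta2; eapply eqm_trans; first apply: eqm_D2.
- by rewrite pbrMl; reflexivity.
- by rewrite hm pbrD !pbrM; reflexivity.
- by rewrite hm pbrD !pbrM; reflexivity.
- by rewrite pbrMl Q2D !hm; reflexivity.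
- by rewrite pbrMl Q2D !hm; reflexivity.
- by rewrite Q2M2; reflexivity.
apply: eqm_eq; rewrite (pbr_skew _ _ h f) (pbr_skew _ _ h g) (pbr_skew _ _ k f) (pbr_skew _ _ k g).
ring.
Qed.

Lemma delta2_s12 f g h : eqm phi (delta2 phi Q f g h) (- delta2 phi Q g f h).
Proof.
rewrite /delta2 (hs g f) (pbr_skew _ _ g f) Q2N pbrN.
by apply: eqm_eq; ring.
Qed.

Lemma delta2_s23 f g h : eqm phi (delta2 phi Q f g h) (- delta2 phi Q f h g).
Proof.
rewrite /delta2 (hs h g) (pbr_skew _ _ h g) Q2N pbrN.
by apply: eqm_eq; ring.
Qed.
End Del2.

Lemma dot_cross_mkv (F : fieldType) (a b : vec F) (p1 p2 p3 : {mpoly F[3]}) :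
  dotv (crossv a b) (mkv p1 p2 p3) =
  (c2 a * c3 b - c3 a * c2 b) * p1 + (c3 a * c1 b - c1 a * c3 b) * p2 + (c1 a * c2 b - c2 a * c1 b) * p3.
Proof. by []. Qed.

Lemma pbr0 (F : fieldType) (phi f : {mpoly F[3]}) : pbr phi f 0 = 0.
Proof. by vunf; rewrite !mderiv0; ring. Qed.

Lemma two_neq0 (F : fieldType) : [pchar F] =i pred0 -> (2%:R : F) != 0.
Proof.
move=> hc; apply/negP => h; have [p hp] := natf0_pchar (isT : (0 < 2)%N) h.
by have := hc p; rewrite hp.
Qed.

Theorem mainTheorem8 (F : fieldType) (w : 'I_3 -> nat) (phi : {mpoly F[3]}) :
  [pchar F] =i pred0 ->
  (forall i, (0 < w i)%N) ->
  gcdn (gcdn (w i0) (w i1)) (w i2) = 1%N ->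
  whis w phi ->
  [/\
   (forall Q, is_der3 phi Q -> forall f g h, eqm phi (Q f g h) 0)
   /\ (forall Q, is_der3 phi Q ->
        exists Q2, is_der2 phi Q2 /\ forall f g h, eqm phi (Q f g h) (delta2 phi Q2 f g h)),
   [/\ forall Q, is_der1 phi Q -> inI phi (dotv (trip1 Q) (grad phi)),
       forall f, inI phi (dotv f (grad phi)) ->
         exists Q, is_der1 phi Q /\ eqmv phi (trip1 Q) f
     & forall Q Q', is_der1 phi Q -> is_der1 phi Q' ->
         eqmv phi (trip1 Q) (trip1 Q') -> forall g, eqm phi (Q g) (Q' g)],
   [/\ forall Q, is_der2 phi Q -> inIv phi (crossv (trip2 Q) (grad phi)),
       forall f, inIv phi (crossv f (grad phi)) ->
         exists Q, is_der2 phi Q /\ eqmv phi (trip2 Q) f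
     & forall Q Q', is_der2 phi Q -> is_der2 phi Q' ->
         eqmv phi (trip2 Q) (trip2 Q') -> forall g h, eqm phi (Q g h) (Q' g h)],
   (forall f : {mpoly F[3]},
      (forall g, eqm phi (delta0 phi f g) 0) <-> inIv phi (crossv (grad f) (grad phi)))
   /\
   (forall Q, is_der1 phi Q ->
      ((forall f0 f1, eqm phi (delta1 phi Q f0 f1) 0) <->
         (inI phi (dotv (trip1 Q) (grad phi)) /\ inIv phi (Lvec phi (trip1 Q))))
      /\ ((exists h, forall g, eqm phi (Q g) (delta0 phi h g)) <->
          exists h, eqmv phi (trip1 Q) (crossv (grad h) (grad phi))))
 & forall Q, is_der2 phi Q ->
     (forall f0 f1 f2, eqm phi (delta2 phi Q f0 f1 f2) 0)
     /\ ((exists Q1, is_der1 phi Q1 /\ forall f g, eqm phi (Q f g) (delta1 phi Q1 f g)) <->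
         exists f, inI phi (dotv f (grad phi)) /\ eqmv phi (trip2 Q) (Lvec phi f))].
Proof.
move=> hchar hw _ [hwh [_ hfin]].
have h2 := two_neq0 _ hchar.
have dep := @depth F w phi hw hwh hfin.
have Z3 : forall Q, is_der3 phi Q -> forall f g h, eqm phi (Q f g h) 0.
  by move=> Q [wd hl hm s12 s23]; apply: (der3_zero _ _ h2 dep).
split.
- split; first exact: Z3.
  move=> Q hQ; exists (fun _ _ => 0); split.
    split.
    - by move=> *; apply: eqm_refl.
    - by move=> *; apply: eqm_eq; rewrite scaler0 addr0.
    - by move=> *; apply: eqm_eq; rewrite !mulr0 addr0.
    - by move=> *; apply: eqm_eq; rewrite oppr0.
  move=> f g h; apply: eqm_trans (Z3 _ hQ f g h) _; apply: eqm_eq.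
  by rewrite /delta2 !pbr0; ring.
- split.
  + by move=> Q hQ; apply: der1_phi.
  + move=> f hf; exists (Qof1 f); split; first exact: Qof1_der.
    by rewrite trip1_Qof1; split; [|split]; apply: eqm_refl.
  + by move=> Q Q' hQ hQ' he; apply: der1_unique.
- split.
  + by move=> Q hQ; apply: (der2_phi _ _ h2).
  + move=> f hf; exists (Qof2 _ f); split; first exact: Qof2_der.
    by rewrite trip2_Qof2; split; [|split]; apply: eqm_refl.
  + by move=> Q Q' hQ hQ' he; apply: (der2_unique _ _ h2).
- split; first exact: H0_iff.
  move=> Q hQ; have [e1 e2 e3] := Lcomp _ _ hQ; split.
  + split.
    * move=> hc; split; first exact: der1_phi.
      by split; [|split]; apply/eqm0; [rewrite -e1 | rewrite -e2 | rewrite -e3]; apply: hc.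
    * move=> [_ [hL1 [hL2 hL3]]] f0 f1.
      have E1 : eqm phi (delta1 phi Q (vy F) (vz F)) 0 by rewrite e1; apply/eqm0.
      have E2 : eqm phi (delta1 phi Q (vz F) (vx F)) 0 by rewrite e2; apply/eqm0.
      have E3 : eqm phi (delta1 phi Q (vx F) (vy F)) 0 by rewrite e3; apply/eqm0.
      rewrite (chain2 h2 _ (delta1_lin2 _ _ _ hQ) (delta1_leib2 _ _ _ hQ) (delta1_skew2 _ _ _ hQ)).
      rewrite /trip2 dot_cross_mkv E1 E2 E3; apply: eqm_eq; ring.
  + split.
    * move=> [h hh]; exists h; split; [|split]; rewrite /trip1 /c1 /c2 /c3 /mkv /=;
        [rewrite (hh (vx F)) | rewrite (hh (vy F)) | rewrite (hh (vz F))];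
        apply: eqm_eq; rewrite /delta0; vunf; dvF F; ring.
    * move=> [h [f1 [f2 f3]]]; exists h => g.
      rewrite /trip1 /c1 /c2 /c3 /mkv /= in f1 f2 f3.
      rewrite (der1_chain hQ g) /Gr f1 f2 f3; apply: eqm_eq; rewrite /delta0; vunf; ring.
- move=> Q hQ; split.
  + move=> f0 f1 f2; apply: (der3_zero _ _ h2 dep) => *.
    * exact: delta2_wd.
    * exact: delta2_lin.
    * exact: delta2_leib.
    * exact: delta2_s12.
    * exact: delta2_s23.
  + split.
    * move=> [Q1 [hQ1 hQQ]]; exists (trip1 Q1); split; first exact: der1_phi.
      have [e1 e2 e3] := Lcomp _ _ hQ1.
      split; [|split].
      - exact: eqm_trans (hQQ (vy F) (vz F)) e1.
      - exact: eqm_trans (hQQ (vz F) (vx F)) e2.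
      - exact: eqm_trans (hQQ (vx F) (vy F)) e3.
    * move=> [f [hf [e1 [e2 e3]]]]; exists (Qof1 f); split; first exact: Qof1_der.
      have hQ1 := Qof1_der _ hf.
      have [l1 l2 l3] := Lcomp _ _ hQ1; rewrite trip1_Qof1 in l1 l2 l3.
      move=> f0 g.
      rewrite (der2_chain _ _ h2 hQ) (chain2 h2 _ (delta1_lin2 _ _ _ hQ1) (delta1_leib2 _ _ _ hQ1) (delta1_skew2 _ _ _ hQ1)).
      rewrite /trip2 !dot_cross_mkv l1 l2 l3.
      rewrite /trip2 /c1 /c2 /c3 /mkv /= in e1 e2 e3.
      by rewrite e1 e2 e3; reflexivity.
Qed.
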